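(* Let $G$ be a finite strongly connected directed graph whose edges carry weight vectors in $\mathbb{Q}^k$, and let $(t_1,\dots,t_k)$ be a vector. If for every $\alpha>0$ there exists a finite cyclic path in $G$ whose average weight is at least $t_i-\alpha$ in every dimension $i$, then there exists an infinite path in $G$ whose mean-payoff vector is at least $(t_1,\dots,t_k)$ in every coordinate.
   Context: A cyclic path is a finite path starting and ending at the same vertex; its average weight in dimension $i$ is the sum of the $i$-th weight coordinates of its edges divided by its length. The mean-payoff vector of an infinite path $e_1e_2\dots$ has $i$-th coordinate $\liminf_{t\to\infty}\frac1t\sum_{s=1}^t w_i(e_s)$. *)

(* Defs.v *)
From HB Require Import structures.
From mathcomp Require Import all_boot all_order all_algebra.
From mathcomp Require Import all_classical all_reals.
From mathcomp Require Import topology normedtype sequences.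
Set Implicit Arguments. Unset Strict Implicit. Unset Printing Implicit Defensive.
Import Order.TTheory GRing.Theory Num.Theory.
Local Open Scope ring_scope.

(* A finite multi-digraph: vertices V, edges E, with source/target maps.
   Edge weights are vectors in Q^k, given as w : E -> 'I_k -> rat. *)

Fixpoint is_path_from (V E : finType) (src dst : E -> V) (u v : V) (s : seq E) : bool :=
  match s with
  | [::] => u == v
  | e :: s' => (src e == u) && is_path_from src dst (dst e) v s'
  end.

Definition strongly_connected (V E : finType) (src dst : E -> V) : Prop :=
  forall u v : V, exists s : seq E, is_path_from src dst u v s.

Definition is_cycle (V E : finType) (src dst : E -> V) (c : seq E) : Prop :=
  (0 < size c)%N /\ exists u : V, is_path_from src dst u u c.

Definition avg_weight (E : finType) (k : nat) (w : E -> 'I_k -> rat)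
  (c : seq E) (i : 'I_k) : rat :=
  (\sum_(e <- c) w e i) / (size c)%:R.

Definition is_inf_path (V E : finType) (src dst : E -> V) (p : nat -> E) : Prop :=
  forall n, dst (p n) = src (p n.+1).

(* mean-payoff in dimension i: liminf_{t->oo} (1/t) sum_{s=1}^t w_i(e_s),
   taken in the extended reals; here index n corresponds to t = n+1 *)
Definition mean_payoff (R : realType) (E : finType) (k : nat)
  (w : E -> 'I_k -> rat) (p : nat -> E) (i : 'I_k) : \bar R :=
  limn_einf (fun n : nat =>
    ((ratr (\sum_(s < n.+1) w (p s) i) : R) / n.+1%:R)%:E).

(* Main.v *)
Require Import Defs.
From HB Require Import structures.
From mathcomp Require Import all_boot all_order all_algebra.
From mathcomp Require Import all_classical all_reals.
From mathcomp Require Import topology normedtype sequences ereal.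
From mathcomp Require Import zify ring lra.
Import Order.TTheory GRing.Theory Num.Theory.
Local Open Scope ring_scope.
Set Implicit Arguments. Unset Strict Implicit.

Definition Fl (E : Type) (D : nat -> seq E) N := flatten (map D (iota 0 N)).

Lemma FlS (E : Type) (D : nat -> seq E) N : Fl D N.+1 = Fl D N ++ D N.
Proof. by rewrite /Fl -addn1 iotaD map_cat flatten_cat /= cats0. Qed.

Lemma Fl_ext (E : Type) (D : nat -> seq E) N M : (N <= M)%N -> exists s, Fl D M = Fl D N ++ s.
Proof.
move=> /subnK <-; elim: (M - N)%N => [|m [s Hs]]; first by exists [::]; rewrite cats0.
by exists (s ++ D (m + N)%N); rewrite addSn FlS Hs catA.
Qed.

Lemma Fl_size (E : Type) (D : nat -> seq E) N : (forall j, 0 < size (D j))%N -> (N <= size (Fl D N))%N.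
Proof.
move=> HD; elim: N => // N IH; rewrite FlS size_cat.
by rewrite -(addn1 N); apply: leq_add IH (HD N).
Qed.

Lemma path_cat (V E : finType) (src dst : E -> V) u v x s1 s2 :
  is_path_from src dst u v s1 -> is_path_from src dst v x s2 -> is_path_from src dst u x (s1 ++ s2).
Proof.
elim: s1 u => [|e s1 IH] u /=; first by move=> /eqP ->.
by move=> /andP[-> H1] H2 /=; apply: IH.
Qed.

Lemma Fl_path (V E : finType) (src dst : E -> V) v0 (D : nat -> seq E) N :
  (forall j, is_path_from src dst v0 v0 (D j)) -> is_path_from src dst v0 v0 (Fl D N).
Proof.
move=> HD; elim: N => [|N IH]; first by rewrite /Fl /= eqxx.
rewrite FlS; exact: path_cat IH (HD N).
Qed.

Lemma path_nth (V E : finType) (src dst : E -> V) u v s e0 i :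
  is_path_from src dst u v s -> (i.+1 < size s)%N ->
  dst (nth e0 s i) = src (nth e0 s i.+1).
Proof.
elim: s u i => [|e s IH] u i //=.
move=> /andP[_ H]; case: i => [|i] /=.
  by case: s H {IH} => //= e' s' /andP[/eqP -> _].
by move=> Hi; apply: (IH (dst e)).
Qed.

Definition pth (E : Type) (e0 : E) (D : nat -> seq E) (x : nat) : E := nth e0 (Fl D x.+1) x.

Lemma pthE (E : Type) (e0 : E) (D : nat -> seq E) x N :
  (forall j, 0 < size (D j))%N -> (x < size (Fl D N))%N -> pth e0 D x = nth e0 (Fl D N) x.
Proof.
move=> HD Hx; rewrite /pth.
have Hx1 : (x < size (Fl D x.+1))%N by apply: leq_trans (Fl_size _ _).
case: (leqP N x.+1) => NM.
  by have [s ->] := Fl_ext D NM; rewrite nth_cat Hx.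
by have [s ->] := Fl_ext D (ltnW NM); rewrite nth_cat Hx1.
Qed.

Lemma pth_path (V E : finType) (src dst : E -> V) v0 e0 (D : nat -> seq E) :
  (forall j, 0 < size (D j))%N -> (forall j, is_path_from src dst v0 v0 (D j)) ->
  is_inf_path src dst (pth e0 D).
Proof.
move=> Hs Hp x.
have Hx : (x.+1 < size (Fl D x.+2))%N by apply: leq_trans (Fl_size _ _).
rewrite (pthE e0 Hs (ltnW Hx)) (pthE e0 Hs Hx).
apply: path_nth Hx; exact: Fl_path Hp.
Qed.

Lemma pth_sum (R : nmodType) (E : Type) (e0 : E) (D : nat -> seq E) (f : E -> R) T N :
  (forall j, 0 < size (D j))%N -> (T <= size (Fl D N))%N ->
  \sum_(s < T) f (pth e0 D s) = \sum_(e <- take T (Fl D N)) f e.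
Proof.
move=> Hs HT; rewrite (big_nth e0) size_take.
have -> : (if (T < size (Fl D N))%N then T else size (Fl D N)) = T.
  by case: ltnP => // H; apply/eqP; rewrite eqn_leq HT H.
rewrite big_mkord; apply: eq_bigr => s _.
by rewrite nth_take // (pthE (N:=N) e0 Hs) // (leq_trans _ HT).
Qed.

Lemma find_block (E : Type) (D : nat -> seq E) T :
  (forall j, 0 < size (D j))%N ->
  exists J, (size (Fl D J) <= T < size (Fl D J.+1))%N.
Proof.
move=> Hs; elim: T => [|T [J /andP[H1 H2]]].
  by exists 0%N; rewrite /= FlS size_cat /Fl /= Hs.
case: (ltnP T.+1 (size (Fl D J.+1))) => H3.
  by exists J; rewrite H3 andbT; apply: leq_trans H1 _.
exists J.+1; have -> : size (Fl D J.+1) = T.+1 by apply/eqP; rewrite eqn_leq H3 H2.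
rewrite leqnn /= FlS size_cat; have := Hs J.+1; lia.
Qed.

Definition nsel (E : Type) (C : nat -> seq E) (T : nat) : nat :=
  (\max_(n < T.+1 | (n.+1 * size (C n) <= T)%N) n)%N.

Fixpoint Tr (E : Type) (C : nat -> seq E) (J : nat) : nat :=
  if J is J'.+1 then (Tr C J' + size (C (nsel C (Tr C J'))))%N else 0%N.

Definition Dsel (E : Type) (C : nat -> seq E) (J : nat) := C (nsel C (Tr C J)).

Lemma Tr_size (E : Type) (C : nat -> seq E) J : size (Fl (Dsel C) J) = Tr C J.
Proof. by elim: J => // J IH; rewrite FlS size_cat IH. Qed.

Lemma nsel_ge (E : Type) (C : nat -> seq E) N T :
  (N.+1 * size (C N) <= T)%N -> (N <= T)%N -> (N <= nsel C T)%N.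
Proof.
move=> H1 H2; have HN : (N < T.+1)%N by [].
exact: (@leq_bigmax_cond _ (fun n : 'I_T.+1 => (n.+1 * size (C n) <= T)%N)
   (fun n : 'I_T.+1 => nat_of_ord n) (Ordinal HN)).
Qed.

Lemma nsel_ok (E : Type) (C : nat -> seq E) N T :
  (N.+1 * size (C N) <= T)%N -> (N <= T)%N ->
  ((nsel C T).+1 * size (C (nsel C T)) <= T)%N.
Proof.
move=> H1 H2; have HN : (N < T.+1)%N by [].
rewrite /nsel (bigop.bigmax_eq_arg (Ordinal HN)) //.
by case: arg_maxnP => //= i Pi _.
Qed.

Lemma size_Fl_mono (E : Type) (D : nat -> seq E) N M :
  (N <= M)%N -> (size (Fl D N) <= size (Fl D M))%N.
Proof. by move=> /(Fl_ext D)[s ->]; rewrite size_cat leq_addr. Qed.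

Lemma take_Fl (E : Type) (D : nat -> seq E) N M T :
  (T <= size (Fl D N))%N -> (T <= size (Fl D M))%N -> take T (Fl D N) = take T (Fl D M).
Proof.
wlog NM : N M / (N <= M)%N.
  move=> Hw H1 H2; case: (leqP N M) => H; first exact: Hw.
  by symmetry; apply: Hw => //; apply: ltnW.
by move=> H1 H2; have [s ->] := Fl_ext D NM; rewrite takel_cat.
Qed.

Lemma key (R : realType) (E : Type) (C : nat -> seq E) (f : E -> R) (a W : R) :
  (forall n, 0 < size (C n))%N ->
  (forall n, (a - (n.+1%:R)^-1) * (size (C n))%:R <= \sum_(e <- C n) f e) ->
  (forall e, - W <= f e) -> 0 <= W ->
  forall eps, 0 < eps -> eps <= 1 -> exists T0, forall T, (T0 <= T)%N ->
    (a - eps * (3 + W + `|a|)) * T%:R <= \sum_(e <- take T (Fl (Dsel C) T.+1)) f e.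
Proof.
move=> Hs Hc HW W0 eps e0 e1.
have HsD : forall j, (0 < size (Dsel C j))%N by move=> j; exact: Hs.
pose N := Num.truncn (eps^-1).
have hN : (N.+1%:R)^-1 <= eps.
  rewrite -[X in _ <= X]invrK lef_pV2 ?posrE ?invr_gt0 // ?ltr0Sn //.
  exact: ltW (truncnS_gt _).
pose J0 := (N + N.+1 * size (C N))%N.
have Tr_ge J : (J <= Tr C J)%N by rewrite -Tr_size; apply: Fl_size.
have nselJ J : (J0 <= J)%N ->
    (N <= nsel C (Tr C J))%N /\ ((nsel C (Tr C J)).+1 * size (Dsel C J) <= Tr C J)%N.
  move=> HJ; have H1 : (N.+1 * size (C N) <= Tr C J)%N.
    by apply: leq_trans (Tr_ge J); apply: leq_trans HJ; rewrite leq_addl.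
  have H2 : (N <= Tr C J)%N.
    by apply: leq_trans (Tr_ge J); apply: leq_trans HJ; rewrite leq_addr.
  by split; [apply: nsel_ge H1 H2 | apply: nsel_ok H1 H2].
pose S (l : seq E) := \sum_(e <- l) f e.
pose K := (a - eps) * (Tr C J0)%:R - S (Fl (Dsel C) J0).
have claim1 J : (J0 <= J)%N -> (a - eps) * (Tr C J)%:R - K <= S (Fl (Dsel C) J).
  move=> /subnK <-; elim: (J - J0)%N => [|m IH]; first by rewrite add0n /K opprB addrCA subrr addr0.
  rewrite addSn FlS /S big_cat /= -/(S _) /=.
  have [HN _] := nselJ (m + J0)%N (leq_addl _ _).
  set n := nsel C (Tr C (m + J0)) in HN *.
  have Hcn := Hc n.
  have : (n.+1%:R)^-1 <= (N.+1%:R)^-1 :> R.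
    by rewrite lef_pV2 ?posrE ?ltr0Sn // ler_nat ltnS.
  have hL : 0 <= (size (C n))%:R :> R by [].
  rewrite natrD mulrDr.
  rewrite /Dsel -/n.
  move=> hn; have : (a - eps) * (size (C n))%:R <= \sum_(e <- C n) f e.
    by apply: le_trans Hcn; apply: ler_wpM2r => //; rewrite lerD2l lerN2 (le_trans hn hN).
  move: IH; rewrite /S; lra.
have [M HM] : exists M : nat, K <= eps * M%:R.
  exists (Num.truncn (K / eps)).+1; rewrite -ler_pdivrMl // mulrC.
  exact: ltW (truncnS_gt _).
exists (maxn (Tr C J0) M); move=> T; rewrite geq_max; move=> /andP[HT0 HTM].
have [J /andP[HJ1 HJ2]] := find_block T HsD.
rewrite Tr_size in HJ1; rewrite Tr_size in HJ2.
have HJ : (J0 <= J)%N.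
  rewrite leqNgt; apply/negP => H.
  have := size_Fl_mono (Dsel C) H; rewrite !Tr_size => H'.
  by move: (leq_trans H' HT0); rewrite leqNgt HJ2.
have -> : take T (Fl (Dsel C) T.+1) = take T (Fl (Dsel C) J.+1).
  apply: take_Fl; last by rewrite Tr_size ltnW.
  by apply: ltnW; apply: leq_trans (Fl_size _ _).
rewrite FlS take_cat Tr_size ltnNge HJ1 /= big_cat /=.
set r := (T - Tr C J)%N.
have [HN Hok] := nselJ J HJ.
have hr : (r < size (Dsel C J))%N by rewrite /r ltn_subLR // -Tr_size -size_cat -FlS.
have hsum : - W * r%:R <= \sum_(e <- take r (Dsel C J)) f e.
  have : - W * (size (take r (Dsel C J)))%:R <= \sum_(e <- take r (Dsel C J)) f e.
    elim: (take r (Dsel C J)) => [|x s IH]; first by rewrite big_nil mulr0.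
    by rewrite big_cons /= -addn1 natrD mulrDr mulr1 addrC; apply: lerD.
  apply: le_trans; rewrite !mulNr lerN2; apply: ler_wpM2l => //.
  by rewrite ler_nat size_take_min geq_minl.
have hT : T%:R = (Tr C J)%:R + r%:R :> R by rewrite -natrD /r subnKC.
have hNr : (N.+1 * r <= Tr C J)%N.
  apply: leq_trans Hok; apply: leq_mul; first by [].
  exact: ltnW.
have hrr : r%:R <= eps * T%:R :> R.
  have h1 : (N.+1%:R) * r%:R <= T%:R :> R.
    by rewrite -natrM ler_nat (leq_trans hNr).
  have h2 : r%:R <= (N.+1%:R)^-1 * T%:R :> R.
    by rewrite ler_pdivlMl ?ltr0Sn.
  apply: le_trans h2 _; apply: ler_wpM2r => //.
have hKM : K <= eps * T%:R.
  apply: le_trans HM _; apply: ler_wpM2l; first exact: ltW.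
  by rewrite ler_nat.
have c1 := claim1 J HJ; rewrite /S in c1.
have ha1 : a <= `|a| by exact: ler_norm.
have ha2 : - a <= `|a| by rewrite -normrN ler_norm.
have p1 : `|a| * r%:R <= `|a| * (eps * T%:R) by apply: ler_wpM2l.
have p2 : W * r%:R <= W * (eps * T%:R) by apply: ler_wpM2l.
have p3 : - a * r%:R <= `|a| * r%:R by apply: ler_wpM2r.
have p4 : 0 <= eps * r%:R by apply: mulr_ge0 => //; exact: ltW.
rewrite hT in c1 hrr hKM p1 p2 *.
nra.
Qed.
Lemma einf_ge (R : realType) (u : nat -> R) (a : R) :
  (forall e : R, 0 < e -> exists N, forall n, (N <= n)%N -> a - e <= u n) ->
  (a%:E <= limn_einf (fun n => (u n)%:E))%E.
Proof.
move=> H; rewrite limn_einf_lim; apply/lee_subgt0Pr => e e0.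
have [N HN] := H e e0.
apply: lime_ge; first exact: is_cvg_einfs.
exists N => // n /= Nn.
apply: le_ereal_inf_tmp => _ [k /= nk <-].
rewrite -EFinB lee_fin; apply: HN; exact: leq_trans nk.
Qed.

Lemma pigeon (V : finType) (u : nat -> V) : exists v, forall n, exists m, (n <= m)%N /\ u m = v.
Proof.
apply: contrapT => H.
have H' : forall v, exists n, forall m, (n <= m)%N -> u m <> v.
  move=> v; apply: contrapT => Hv; apply: H; exists v => n.
  apply: contrapT => Hn; apply: Hv; exists n => m nm um; apply: Hn; by exists m.
have [N HN] := choice H'.
pose M := (\max_v N v)%N.
by apply: (HN (u M) M) => //; apply: leq_bigmax.
Qed.

Unset Implicit Arguments.
Set Strict Implicit.

Theorem lemma5 (R : realType) (V E : finType) (src dst : E -> V) (k : nat)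
  (w : E -> 'I_k -> rat) (t : 'I_k -> R) :
  strongly_connected src dst ->
  (forall alpha : R, 0 < alpha ->
     exists c : seq E, is_cycle src dst c /\
       forall i : 'I_k, t i - alpha <= ratr (avg_weight w c i)) ->
  exists p : nat -> E, is_inf_path src dst p /\
    forall i : 'I_k, ((t i)%:E <= mean_payoff R w p i)%E.
Proof.
move=> _ Hcyc.
have H1 : forall n : nat, exists cu : seq E * V, [/\ (0 < size cu.1)%N,
    is_path_from src dst cu.2 cu.2 cu.1 &
    forall i, t i - (n.+1%:R)^-1 <= ratr (avg_weight w cu.1 i)].
  move=> n; have hn : 0 < n.+1%:R^-1 :> R by rewrite invr_gt0 ltr0Sn.
  have [c [[Hs [u Hu]] Hc]] := Hcyc _ hn.
  by exists (c, u).
have [cu Hcu] := choice H1.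
have [v0 Hv0] := pigeon (fun n => (cu n).2).
have [g Hg] := choice Hv0.
pose C n := (cu (g n)).1.
have HsC : forall n, (0 < size (C n))%N by move=> n; have [] := Hcu (g n).
have HpC : forall n, is_path_from src dst v0 v0 (C n).
  by move=> n; have [_ Hp _] := Hcu (g n); have [_ <-] := Hg n.
have HcC : forall n i, (t i - n.+1%:R^-1) * (size (C n))%:R <= \sum_(e <- C n) ratr (w e i) :> R.
  move=> n i; have [Hs _ Hc] := Hcu (g n); have [Hgn _] := Hg n.
  have := Hc i; rewrite /avg_weight fmorph_div rmorph_nat rmorph_sum -/(C n) => H.
  rewrite -ler_pdivlMr ?ltr0n //; apply: le_trans H.
  rewrite lerD2l lerN2 lef_pV2 ?posrE ?ltr0Sn // ler_nat ltnS //.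
have [e0 _] : exists e : E, true.
  by move: (HsC 0%N); case: (C 0%N) => // e _ _; exists e.
exists (pth e0 (Dsel C)); split.
  apply: (pth_path (v0 := v0)) => j; [exact: HsC | exact: HpC].
move=> i.
pose f e := ratr (w e i) : R.
pose W := \sum_(e : E) `|f e|.
have W0 : 0 <= W by apply: sumr_ge0 => e _.
have HW : forall e, - W <= f e.
  move=> e; apply: lerNnormlW; rewrite /W (bigD1 e) //=.
  by rewrite lerDl; apply: sumr_ge0.
have HsD : forall j, (0 < size (Dsel C j))%N by move=> j; exact: HsC.
rewrite /mean_payoff; apply: einf_ge => eta eta0.
pose c := 3 + W + `|t i|.
have c0 : 0 < c by rewrite /c; have := normr_ge0 (t i); lra.
pose eps := Num.min 1 (eta / c).
have eps0 : 0 < eps by rewrite /eps lt_min ltr01 divr_gt0.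
have eps1 : eps <= 1 by rewrite /eps ge_min lexx.
have epsc : eps * c <= eta.
  by rewrite -ler_pdivlMr // /eps ge_min lexx orbT.
have [T0 HT0] := key (C := C) (f := f) HsC (HcC^~ i) HW W0 eps0 eps1.
exists T0 => n Hn.
rewrite rmorph_sum (pth_sum (N := n.+2) e0 f) //; last exact: leq_trans (leqnSn _) (Fl_size _ HsD).
have := HT0 n.+1 (leq_trans Hn (leqnSn n)); rewrite -/c => H.
rewrite ler_pdivlMr ?ltr0Sn //; apply: le_trans H.
apply: ler_wpM2r => //; lra.
Qed.
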